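(* Let $\lambda$ be a well-behaved hypergraph width measure, $k$ an integer, and $H$ a hypergraph with $\lambda\text{-}tw(H)\le k$. Then every clique $C$ of $\underline{\underline{H}}$ satisfies $\lambda_H(C)\le k$. Furthermore, every $(A,B)$-separator $S$ of $H$ with $\lambda_H(S)\le k$ is an $(A,B)$-separator in $\underline{\underline{H}}$.
   Context: A hypergraph $H$ has finite vertex set $V(H)$ and edge set $E(H)$ of subsets of $V(H)$; $||H||$ is the size of its encoding. The Gaifman graph $\underline{H}$ is the graph on $V(H)$ with two distinct vertices adjacent iff they lie in a common edge; $N_G(u)$ is the neighbourhood of $u$ in a graph $G$. The graph $\underline{\underline{H}}$ (depending on $k$) is obtained from $G_0=\underline{H}$ by repeatedly adding to the current graph $G_i$ an edge $uv$ between non-adjacent vertices with $\lambda_H(N_{G_i}(u)\cap N_{G_i}(v))>k$, until no such pair remains (in any order, e.g. lexicographically first). A set $S$ is an $(A,B)$-separator in a graph $G$ (of $H$: in $\underline{H}$) if $A\cap B\subseteq S$ and every path in $G$ from a vertex of $A$ to a vertex of $B$ contains a vertex of $S$. A tree decomposition of $H$ is a tree $T$ with bags $B_t\subseteq V(H)$ such that nodes containing a given vertex form a connected subtree and every edge of $\underline{H}$ is inside some bag. A width measure $\lambda$ assigns to each hypergraph $H$ a real function $\lambda_H$ on subsets of $V(H)$; $\lambda\text{-}tw(H)$ is the minimum over tree decompositions of $\max_t\lambda_H(B_t)$. $\lambda$ is well-behaved if: (1) $\lambda_H(\{x\})\ge1$; (2) $\lambda_H(S\cup T)\le\lambda_H(S)+\lambda_H(T)$;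 (3) equality in (2) for disjoint $S,T$ with no edge of $\underline{H}$ between them; (4) $\lambda_F(S)\le\lambda_H(T)$ whenever $V(H)\subseteq V(F)$, $E(H)\subseteq E(F)$ and $S\subseteq T$; (5) $\lambda_H(S)\le k$ is decidable in time $||H||^{O(k)}$. *)

(* Defs.v *)
From mathcomp Require Import all_boot all_order all_algebra.
Set Implicit Arguments. Unset Strict Implicit. Unset Printing Implicit Defensive.
Import Order.TTheory GRing.Theory Num.Theory.
Local Open Scope ring_scope.

Record hypergraph (T : finType) := Hypergraph {
  hv : {set T};
  he : {set {set T}}
}.

Definition wf_hg (T : finType) (H : hypergraph T) : Prop :=
  forall e, e \in he H -> e \subset hv H.

Definition gaifman (T : finType) (H : hypergraph T) : rel T :=
  [rel u v | (u != v) && [exists e, (e \in he H) && (u \in e) && (v \in e)]].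

Definition width_measure (T : finType) (R : realFieldType) :=
  hypergraph T -> {set T} -> R.

Definition well_behaved (T : finType) (R : realFieldType)
    (lam : width_measure T R) : Prop :=
  (forall H, wf_hg H -> forall x, x \in hv H -> 1 <= lam H [set x]) /\
  (forall H, wf_hg H -> forall S U : {set T}, S \subset hv H -> U \subset hv H ->
     lam H (S :|: U) <= lam H S + lam H U) /\
  (forall H, wf_hg H -> forall S U : {set T}, S \subset hv H -> U \subset hv H ->
     [disjoint S & U] ->
     (forall x y, x \in S -> y \in U -> ~~ gaifman H x y) ->
     lam H (S :|: U) = lam H S + lam H U) /\
  (forall F H, wf_hg F -> wf_hg H -> hv H \subset hv F -> he H \subset he F ->
     forall S U : {set T}, S \subset U -> U \subset hv H -> lam F S <= lam H U).

Definition is_tree (n : nat) (tr : rel 'I_n) : Prop :=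
  (0 < n)%N /\ irreflexive tr /\ symmetric tr /\
  (forall x y, connect tr x y) /\
  #|[set p : 'I_n * 'I_n | tr p.1 p.2]| = (2 * (n - 1))%N.

Definition tree_decomposition (T : finType) (H : hypergraph T)
    (n : nat) (tr : rel 'I_n) (B : 'I_n -> {set T}) : Prop :=
  is_tree tr /\
  (forall t, B t \subset hv H) /\
  (forall v, v \in hv H -> exists t, v \in B t) /\
  (forall v t1 t2, v \in B t1 -> v \in B t2 ->
     connect [rel x y | tr x y && (v \in B x) && (v \in B y)] t1 t2) /\
  (forall u v, gaifman H u v -> exists t, (u \in B t) && (v \in B t)).

Definition lam_tw_le (T : finType) (R : realFieldType) (lam : width_measure T R)
    (H : hypergraph T) (k : int) : Prop :=
  exists n (tr : rel 'I_n) (B : 'I_n -> {set T}),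
    tree_decomposition H tr B /\ forall t, lam H (B t) <= k%:~R.

Definition nbh (T : finType) (G : rel T) (u : T) : {set T} := [set w | G u w].

Definition add_edge (T : finType) (G : rel T) (u v : T) : rel T :=
  [rel x y | G x y || ((x == u) && (y == v)) || ((x == v) && (y == u))].

Definition can_add (T : finType) (R : realFieldType) (lam : width_measure T R)
    (H : hypergraph T) (k : int) (G : rel T) (u v : T) : Prop :=
  [/\ u \in hv H, v \in hv H, u != v, ~~ G u v &
      k%:~R < lam H (nbh G u :&: nbh G v)].

Inductive closure_seq (T : finType) (R : realFieldType) (lam : width_measure T R)
    (H : hypergraph T) (k : int) : rel T -> Prop :=
| cl_start : closure_seq lam H k (gaifman H)
| cl_step G u v : closure_seq lam H k G -> can_add lam H k G u v ->
    closure_seq lam H k (add_edge G u v).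

(* G is a result of the closure process (any order): reachable and saturated. *)
Definition is_closure (T : finType) (R : realFieldType) (lam : width_measure T R)
    (H : hypergraph T) (k : int) (G : rel T) : Prop :=
  closure_seq lam H k G /\ forall u v, ~ can_add lam H k G u v.

Definition is_clique (T : finType) (H : hypergraph T) (G : rel T) (C : {set T}) : Prop :=
  C \subset hv H /\ forall u v, u \in C -> v \in C -> u != v -> G u v.

Definition separator (T : finType) (G : rel T) (A B S : {set T}) : Prop :=
  A :&: B \subset S /\
  forall a p, a \in A -> path G a p -> last a p \in B -> has (mem S) (a :: p).

(* Main.v *)
Require Import Defs.
From mathcomp Require Import all_boot all_order all_algebra.
From mathcomp Require Import zify.

Import Order.TTheory GRing.Theory Num.Theory.
Set Implicit Arguments. Unset Strict Implicit.

Lemma path_inv (T : Type) (e : rel T) (P : pred T) x p :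
  (forall y z, P y -> e y z -> P z) -> P x -> path e x p -> P (last x p).
Proof.
move=> hP; elim: p x => [|y p IH] x Px //= /andP[exy pp].
exact: IH (hP _ _ Px exy) pp.
Qed.

Lemma connect_inv (T : finType) (e : rel T) (P : pred T) x y :
  (forall y z, P y -> e y z -> P z) -> P x -> connect e x y -> P y.
Proof. by move=> hP Px /connectP[p pp ->]; apply: (path_inv hP Px pp). Qed.

Section Tree.
Variable n : nat.
Variable tr : rel 'I_n.

Definition rrel (X : {set 'I_n}) : rel 'I_n :=
  [rel a b | tr a b && (a \in X) && (b \in X)].
Definition conn (X : {set 'I_n}) :=
  forall x y, x \in X -> y \in X -> connect (rrel X) x y.
Definition edges (N : {set 'I_n}) :=
  [set p : 'I_n * 'I_n | tr p.1 p.2 && (p.1 \in N) && (p.2 \in N)].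
Definition tree_on (N : {set 'I_n}) :=
  [/\ irreflexive tr, symmetric tr, conn N & #|edges N| = (2 * (#|N| - 1))%N].

Lemma first_step (X : {set 'I_n}) x z : conn X -> x \in X -> z \in X -> x != z ->
  exists q, [/\ q \in X, tr x q & x \in X].
Proof.
move=> cX xX zX xz; case/connectP: (cX _ _ xX zX) => [[|q p]] /=.
  by move=> _ E; rewrite E eqxx in xz.
by case/andP=> /andP[/andP[txq _] qX] _ _; exists q.
Qed.

Lemma conn_remove_leaf (X : {set 'I_n}) l p : irreflexive tr -> symmetric tr ->
  (forall q, q \in X -> tr l q -> q = p) ->
  forall x y, x \in X -> x != l -> y != l -> connect (rrel X) x y ->
  connect (rrel (X :\ l)) x y.
Proof.
move=> irr sym uniq x y xX xl yl cxy.
pose P := fun z => if z == l then (p \in X :\ l) && connect (rrel (X :\ l)) x p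
                   else connect (rrel (X :\ l)) x z.
have : P y.
  apply: (connect_inv _ _ cxy); last by rewrite /P (negbTE xl) connect0.
  move=> z z'; rewrite /P /= => Pz /andP[/andP[tzz' zX] z'X].
  case: (eqVneq z l) Pz => [Ez|zl] Pz; case: (eqVneq z' l) => [E|z'l].
  - by rewrite E Ez irr in tzz'.
  - by rewrite -Ez in uniq; rewrite (uniq z' z'X tzz'); case/andP: Pz.
  - have zp : z = p by apply: uniq zX _; rewrite sym -E.
    by rewrite -zp !inE zl zX.
  - apply: connect_trans Pz (connect1 _).
    by rewrite /rrel /= tzz' !inE zl zX z'l z'X.
by rewrite /P (negbTE yl).
Qed.


Lemma edges_sum (N : {set 'I_n}) :
  #|edges N| = (\sum_(t in N) #|[set q in N | tr t q]|)%N.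
Proof.
rewrite /edges -sum1dep_card.
transitivity (\sum_(p : 'I_n * 'I_n | (p.1 \in N) && ((p.2 \in N) && tr p.1 p.2)) 1)%N.
  by apply: eq_bigl => -[a b] /=; case: (tr a b); case: (a \in N); case: (b \in N).
rewrite -(pair_big_dep (fun t => t \in N) (fun t q => (q \in N) && tr t q) (fun _ _ => 1%N)).
by apply: eq_bigr => t _; rewrite sum1dep_card.
Qed.

Lemma leaf_exists (N : {set 'I_n}) : tree_on N -> (1 < #|N|)%N ->
  exists l p, [/\ l \in N, p \in N, tr l p & forall q, q \in N -> tr l q -> q = p].
Proof.
case=> irr sym cN cardE h1.
have [t tN dt] : exists2 t, t \in N & (#|[set q in N | tr t q]| < 2)%N.
  case: (boolP [exists t in N, (#|[set q in N | tr t q]| < 2)%N]) => [/exists_inP[t tN dt]|/exists_inPn hall]; first by exists t.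
  exfalso.
  have : (#|N| * 2 <= #|edges N|)%N.
    rewrite edges_sum -sum_nat_const; by apply: leq_sum => t tN; rewrite leqNgt hall.
  rewrite cardE; lia.
have [z zN zt] : exists2 z, z \in N & t != z.
  case/card_gt1P: h1 => x [y [xN yN xy]].
  case: (eqVneq t x) => [E|tx]; last by exists x.
  by exists y => //; rewrite E.
have [q [qN tq _]] := first_step cN tN zN zt.
have qS : q \in [set q in N | tr t q] by rewrite inE qN tq.
have /cards1P[p Ep] : #|[set q in N | tr t q]| == 1%N.
  have : (0 < #|[set q in N | tr t q]|)%N by apply/card_gt0P; exists q.
  move: dt; lia.
have : p \in [set q in N | tr t q] by rewrite Ep set11.
rewrite inE => /andP[pN tp].
exists t, p; split => // q' q'N tq'.
have : q' \in [set q in N | tr t q] by rewrite inE q'N tq'.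
by rewrite Ep inE => /eqP.
Qed.


Lemma helly (I : finType) m : forall (N : {set 'I_n}) (X : I -> {set 'I_n}),
  #|N| = m.+1 -> tree_on N -> (forall i, X i \subset N) -> (forall i, conn (X i)) ->
  (forall i j, X i :&: X j != set0) -> exists2 t, t \in N & forall i, t \in X i.
Proof.
elim: m => [|m IH] N X cN tN sub cX pw.
  have /cards1P[t Et] : #|N| == 1%N by rewrite cN.
  exists t; first by rewrite Et set11.
  move=> i; have /set0Pn[x] := pw i i; rewrite setIid => xi.
  by have := subsetP (sub i) x xi; rewrite Et inE => /eqP <-.
have h1 : (1 < #|N|)%N by rewrite cN.
have [l [p [lN pN tlp uq]]] := leaf_exists tN h1.
have [irr sym cNN cE] := tN.
have pl : p != l by apply/eqP => E; rewrite E irr in tlp.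
pose N' := N :\ l.
pose X' i := (X i :\ l) :|: (if l \in X i then [set p] else set0).
have cN' : #|N'| = m.+1 by move: cN; rewrite (cardsD1 l N) lN add1n => -[].
have singl : forall i, l \in X i -> p \notin X i -> forall z, z \in X i -> z = l.
  move=> i li pi z zi; apply/eqP; apply/negPn/negP => zl.
  have lz : l != z by rewrite eq_sym.
  have [q [qX tlq _]] := first_step (cX i) li zi lz.
  have E := uq q (subsetP (sub i) q qX) tlq.
  by rewrite -E qX in pi.
have cXl : forall i, conn (X i :\ l).
  move=> i x y; rewrite !inE => /andP[xl xi] /andP[yl yi].
  apply: (conn_remove_leaf irr sym _ xi xl yl (cX i x y xi yi)).
  by move=> q qX; apply: uq; exact: subsetP (sub i) q qX.
have tN' : tree_on N'.
  split => //.
    move=> x y; rewrite !inE => /andP[xl xN] /andP[yl yN].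
    apply: (conn_remove_leaf irr sym _ xN xl yl (cNN x y xN yN)).
    exact: uq.
  have E' : edges N' = edges N :\ (l, p) :\ (p, l).
    apply/setP => -[a b]; rewrite !inE /= !xpair_eqE.
    case: (eqVneq a l) => [->|al]; case: (eqVneq b l) => [->|bl] /=.
    - by rewrite irr !andbF.
    - case tlb: (tr l b) => //=; case bN: (b \in N); rewrite ?andbF //.
      by rewrite (uq b bN tlb) eqxx.
    - case tal: (tr a l) => //=; case aN: (a \in N); rewrite ?andbF //.
      by rewrite sym in tal; rewrite (uq a aN tal) eqxx.
    - by rewrite andbF.
  rewrite E'.
  have e1 : (l, p) \in edges N by rewrite inE /= tlp lN pN.
  have e2 : (p, l) \in edges N :\ (l, p).
    by rewrite !inE /= xpair_eqE (negbTE pl) /= sym tlp lN pN.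
  move: cE; rewrite (cardsD1 (l, p)) e1 (cardsD1 (p, l) (edges N :\ (l, p))) e2 cN'.
  rewrite cN /=; set x := #|_ :\ (p, l)|; move=> hx; clearbody x; lia.
have [t tN1 tX'] : exists2 t, t \in N' & forall i, t \in X' i.
  apply: (IH N' X' cN' tN').
  - move=> i; apply/subsetP => x; rewrite !inE.
    case li: (l \in X i); rewrite ?inE.
      case/orP => [/andP[xl xi]|/eqP ->]; last by rewrite pl pN.
      by rewrite xl (subsetP (sub i) x xi).
    by rewrite orbF => /andP[xl xi]; rewrite xl (subsetP (sub i) x xi).
  - move=> i; rewrite /X'.
    case li: (l \in X i); last by rewrite setU0.
    case pi: (p \in X i).
      have -> : X i :\ l :|: [set p] = X i :\ l.
        by apply/setUidPl; rewrite sub1set !inE pl pi.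
      exact: cXl.
    have -> : X i :\ l = set0.
      apply/setP => z; rewrite !inE; apply/negP => /andP[zl zi].
      by rewrite (singl i li (negbT pi) z zi) eqxx in zl.
    rewrite set0U => x y; rewrite !inE => /eqP -> /eqP ->; exact: connect0.
  - move=> i j; have /set0Pn[z] := pw i j; rewrite inE => /andP[zi zj].
    apply/set0Pn; case: (eqVneq z l) => [E|zl].
      by exists p; rewrite !inE -E zi zj !set11 !orbT.
    by exists z; rewrite !inE zl zi zj.
case: (eqVneq t p) => [Etp|tp].
  case: (boolP [forall i, p \in X i]) => [/forallP allp|/forallPn[i0 pi0]].
    by exists p.
  have li0 : l \in X i0.
    move: (tX' i0); rewrite !inE Etp (negbTE pi0) andbF /=.
    by case: (l \in X i0); rewrite ?inE.
  exists l => // j; have /set0Pn[z] := pw j i0; rewrite inE => /andP[zj zi0].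
  by rewrite -(singl i0 li0 pi0 z zi0).
exists t; first by move: tN1; rewrite inE => /andP[].
move=> i; move: (tX' i); rewrite !inE.
by case: (l \in X i); rewrite ?inE ?(negbTE tp) ?orbF => /andP[].
Qed.

End Tree.

Lemma conn_union n (tr : rel 'I_n) (A B : {set 'I_n}) :
  conn tr A -> conn tr B -> A :&: B != set0 -> conn tr (A :|: B).
Proof.
move=> cA cB /set0Pn[z]; rewrite inE => /andP[zA zB].
have subA : forall x y, connect (rrel tr A) x y -> connect (rrel tr (A :|: B)) x y.
  apply: connect_sub => x y; rewrite /rrel /= => /andP[/andP[txy xA] yA].
  by apply: connect1; rewrite /= txy !inE xA yA.
have subB : forall x y, connect (rrel tr B) x y -> connect (rrel tr (A :|: B)) x y.
  apply: connect_sub => x y; rewrite /rrel /= => /andP[/andP[txy xA] yA].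
  by apply: connect1; rewrite /= txy !inE xA yA !orbT.
move=> x y; rewrite !inE => /orP[xA|xB] /orP[yA|yB].
- by apply: subA; exact: cA.
- exact: connect_trans (subA _ _ (cA x z xA zA)) (subB _ _ (cB z y zB yB)).
- exact: connect_trans (subB _ _ (cB x z xB zB)) (subA _ _ (cA z y zA yA)).
- by apply: subB; exact: cB.
Qed.

Lemma tree_setT n (tr : rel 'I_n) : is_tree tr -> tree_on tr [set: 'I_n].
Proof.
case=> n0 [irr [sym [cn cE]]]; split => //.
  move=> x y _ _.
  have E : rrel tr [set: 'I_n] =2 tr by move=> a b; rewrite /rrel /= !in_setT !andbT.
  by rewrite (eq_connect E).
have -> : edges tr [set: 'I_n] = [set p | tr p.1 p.2] by apply/setP => p; rewrite !inE !andbT.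
by rewrite cE cardsT card_ord.
Qed.

Definition rG (T : finType) (G : rel T) (S : {set T}) : rel T :=
  [rel x y | G x y && (x \notin S) && (y \notin S)].

Lemma path_rG (T : finType) (G : rel T) (S : {set T}) x p :
  x \notin S -> path (rG G S) x p = path G x p && ~~ has (mem S) p.
Proof.
elim: p x => [|y p IH] x hx //=.
rewrite /rG /= hx /=; case hy: (y \in S) => /=; first by rewrite !andbF.
by rewrite IH ?hy // !andbT andbA.
Qed.

Unset Implicit Arguments.
Local Open Scope ring_scope.

Theorem mainTheorem18 (T : finType) (R : realFieldType) (lam : width_measure T R)
    (k : int) (H : hypergraph T) :
  well_behaved lam -> wf_hg H -> lam_tw_le lam H k ->
  forall G : rel T, is_closure lam H k G ->
  (forall C : {set T}, is_clique H G C -> lam H C <= k%:~R) /\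
  (forall A B S : {set T}, A \subset hv H -> B \subset hv H -> S \subset hv H ->
     separator (gaifman H) A B S -> lam H S <= k%:~R -> separator G A B S).
Proof.
move=> [_ [_ [_ H4]]] wfH [n [tr [Bg [[Htree [HBsub [Hcov [Hconn Hedge]]]] Hbnd]]]] G [Gseq Gsat].
have mono : forall S U : {set T}, S \subset U -> U \subset hv H -> lam H S <= lam H U.
  by move=> S U; exact: H4.
pose Tv v := [set t | v \in Bg t].
have tT := tree_setT Htree.
have cardT : #|[set: 'I_n]| = (#|[set: 'I_n]|.-1).+1.
  by rewrite prednK // cardsT card_ord; case: Htree.
have HellyT : forall (I : finType) (X : I -> {set 'I_n}), (forall i, conn tr (X i)) ->
    (forall i j, X i :&: X j != set0) -> exists t, forall i, t \in X i.
  move=> I X cX pw; have [t _ h] := helly cardT tT (fun i => subsetT (X i)) cX pw.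
  by exists t.
have connT : forall v, conn tr (Tv v).
  move=> v x y; rewrite !inE => xv yv.
  have E : rrel tr (Tv v) =2 [rel a b | tr a b && (v \in Bg a) && (v \in Bg b)].
    by move=> a b; rewrite /rrel /= !inE.
  by rewrite (eq_connect E); exact: Hconn.
have bagbound : forall (W : {set T}) t, W \subset Bg t -> lam H W <= k%:~R.
  by move=> W t sW; apply: le_trans (Hbnd t); apply: mono.
have key : forall G' : rel T, (forall x y, G' x y -> exists t, (x \in Bg t) && (y \in Bg t)) ->
    forall u v, k%:~R < lam H (nbh G' u :&: nbh G' v) -> exists t, (u \in Bg t) && (v \in Bg t).
  move=> G' cov u v hl.
  case: (boolP [exists t, (u \in Bg t) && (v \in Bg t)]) => [/existsP//|/existsPn nuv].
  exfalso.
  set W := nbh G' u :&: nbh G' v.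
  have pw : forall w w', w \in W -> w' \in W -> Tv w :&: Tv w' != set0.
    move=> w w'; rewrite !inE => /andP[uw vw] /andP[uw' vw'].
    pose Y o := match o with None => Tv u | Some true => Tv v :|: Tv w' | Some false => Tv w end.
    have cY : forall o, conn tr (Y o).
      case=> [[]|]; [|exact: connT|exact: connT].
      apply: conn_union; [exact: connT|exact: connT|].
      by case: (cov _ _ vw') => t /andP[a b]; apply/set0Pn; exists t; rewrite !inE a b.
    have pwY : forall o o', Y o :&: Y o' != set0.
      case=> [[]|] [[]|]; rewrite /Y;
      [ case: (cov _ _ vw') | case: (cov _ _ vw) | case: (cov _ _ uw')
      | case: (cov _ _ vw) | case: (cov _ _ uw) | case: (cov _ _ uw)
      | case: (cov _ _ uw') | case: (cov _ _ uw) | case: (cov _ _ uw) ];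
      by move=> t /andP[a b]; apply/set0Pn; exists t; rewrite !inE ?a ?b ?orbT.
    have [t ht] := HellyT _ Y cY pwY.
    have := ht None; have := ht (Some true); have := ht (Some false).
    rewrite /Y !inE => tw /orP[tv|tw'] tu.
      by have := nuv t; rewrite tu tv.
    by apply/set0Pn; exists t; rewrite !inE tw tw'.
  pose X w := if w \in W then Tv w else [set: 'I_n].
  have cX : forall w, conn tr (X w).
    by move=> w; rewrite /X; case: (w \in W); [exact: connT|case: tT].
  have pwX : forall w w', X w :&: X w' != set0.
    move=> w w'; rewrite /X; case wW: (w \in W); case w'W: (w' \in W).
    - exact: pw.
    - by rewrite setIT; move: (pw w w wW wW); rewrite setIid.
    - by rewrite setTI; move: (pw w' w' w'W w'W); rewrite setIid.
    - by rewrite setIT; apply/set0Pn; exists (Ordinal (proj1 Htree)); rewrite in_setT.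
  have [t ht] := HellyT _ X cX pwX.
  have sW : W \subset Bg t.
    by apply/subsetP => w wW; have := ht w; rewrite /X wW inE.
  have := bagbound W t sW.
  by rewrite leNgt hl.
have inv : forall G', closure_seq lam H k G' ->
    forall x y, G' x y -> exists t, (x \in Bg t) && (y \in Bg t).
  move=> G'; elim => [|G1 u v _ IH [hu hv huv hnG hl]] x y.
    by move=> hxy; exact: Hedge.
  rewrite /add_edge /= => /orP[/orP[/IH //|/andP[/eqP -> /eqP ->]]|/andP[/eqP -> /eqP ->]].
    exact: key IH u v hl.
  by have [t ht] := key G1 IH u v hl; exists t; rewrite andbC.
split.
  move=> C [Csub Ccl].
  pose X c := if c \in C then Tv c else [set: 'I_n].
  have cX : forall c, conn tr (X c).
    by move=> c; rewrite /X; case: (c \in C); [exact: connT|case: tT].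
  have ne : forall c, c \in C -> Tv c != set0.
    move=> c cC; have [t ht] := Hcov c (subsetP Csub c cC).
    by apply/set0Pn; exists t; rewrite inE.
  have pwX : forall c c', X c :&: X c' != set0.
    move=> c c'; rewrite /X; case cC: (c \in C); case c'C: (c' \in C).
    - case: (eqVneq c c') => [<-|cc']; first by rewrite setIid; exact: ne.
      have [t /andP[a b]] := inv G Gseq c c' (Ccl c c' cC c'C cc').
      by apply/set0Pn; exists t; rewrite !inE a b.
    - by rewrite setIT; exact: ne.
    - by rewrite setTI; exact: ne.
    - by rewrite setIT; apply/set0Pn; exists (Ordinal (proj1 Htree)); rewrite in_setT.
  have [t ht] := HellyT _ X cX pwX.
  apply: (bagbound C t); apply/subsetP => c cC.
  by have := ht c; rewrite /X cC inE.
move=> A B S hA hB hS [hAB hsep] hlS; split => //.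
have invS : forall G', closure_seq lam H k G' -> symmetric G' /\
    forall a b, a \in A -> b \in B -> a \notin S -> b \notin S -> ~~ connect (rG G' S) a b.
  move=> G'; elim => [|G1 u v _ [symG IH] [hu hv huv hnG hl]].
    split.
      move=> x y; rewrite /gaifman /= eq_sym; congr (_ && _).
      by apply/existsP/existsP => -[e /andP[/andP[a b] c]]; exists e; rewrite a b c.
    move=> a b aA bB aS bS; apply/negP => /connectP[p pp Eb].
    rewrite path_rG // in pp; case/andP: pp => pp hp.
    have := hsep a p aA pp; rewrite -Eb => /(_ bB).
    by rewrite /= (negbTE aS) (negbTE hp).
  split.
    move=> x y; rewrite /add_edge /= symG.
    by case: (G1 y x); case: (x == u); case: (y == v); case: (x == v); case: (y == u).
  move=> a b aA bB aS bS.
  have step : forall x y, k%:~R < lam H (nbh G1 x :&: nbh G1 y) -> x \notin S -> y \notin S ->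
      connect (rG G1 S) a x -> connect (rG G1 S) a y.
    move=> x y hl' xS yS cax; apply/negPn/negP => ncay.
    have sW : nbh G1 x :&: nbh G1 y \subset S.
      apply/subsetP => w; rewrite !inE => /andP[xw yw]; apply/negPn/negP => wS.
      move/negP: ncay; apply; apply: connect_trans cax _.
      have e1 : rG G1 S x w by rewrite /rG /= xw xS wS.
      have e2 : rG G1 S w y by rewrite /rG /= symG yw yS wS.
      exact: connect_trans (connect1 e1) (connect1 e2).
    have := le_trans (mono _ _ sW hS) hlS.
    by rewrite leNgt hl'.
  apply/negP => cab.
  have : connect (rG G1 S) a b.
    apply: (connect_inv (P := connect (rG G1 S) a) _ (connect0 _ a) cab).
    move=> z z' Pz; rewrite /rG /add_edge /=.
    case/andP => /andP[/orP[/orP[Gzz'|/andP[/eqP Ez /eqP Ez']]|/andP[/eqP Ez /eqP Ez']] zS] z'S.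
    - by apply: connect_trans Pz (connect1 _); rewrite /rG /= Gzz' zS z'S.
    - by subst; exact: step hl zS z'S Pz.
    - by subst; apply: step _ zS z'S Pz; rewrite setIC.
  by apply/negP: (IH a b aA bB aS bS).
have [symG nc] := invS G Gseq.
move=> a p aA pp lB; apply/negPn/negP => hn.
move: (hn); rewrite /= negb_or => /andP[aS hp].
have lS : last a p \notin S.
  apply/negP => lS; move/negP: hn; apply; apply/hasP; exists (last a p) => //.
  exact: mem_last.
have : connect (rG G S) a (last a p).
  by apply/connectP; exists p => //; rewrite path_rG // pp.
by apply/negP; apply: nc.
Qed.
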